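(* Let $X$ be a geodesic metric space which is a $(\tau,\eta)$-tight network with respect to a collection $\mathcal L$ of subsets. For every $M\ge0$ there exists $R=R(M)$ such that for every $L,L'\in\mathcal L$ with $\mathcal N_M(L)\cap\mathcal N_M(L')\neq\emptyset$ and any point $a\in\mathcal N_M(L)\cap\mathcal N_M(L')$, there exists a sequence $L_1=L,L_2,\dots,L_n=L'$ with $L_i\in\mathcal L$ and $n\le R$ such that for all $1\le i<n$, $\mathcal N_\tau(L_i)\cap\mathcal N_\tau(L_{i+1})$ has infinite diameter, is $\eta$-path connected, and intersects $B(a,R)$.
   Context: $\mathcal N_R(A)=\{z:\mathrm{dist}(z,A)<R\}$, $B(a,R)$ open ball. A $(\lambda,\kappa)$-quasi-geodesic satisfies $\frac1\lambda|s-t|-\kappa\le\mathrm{dist}(q(s),q(t))\le\lambda|s-t|+\kappa$. A subset $A$ is $(\tau,\eta)$-quasi-convex if any two of its points are joined by an $(\eta,\eta)$-quasi-geodesic in $\mathcal N_\tau(A)$, and $\eta$-path connected if any two of its points are joined by a path in $\mathcal N_\eta(A)$. $X$ is a $(\tau,\eta)$-tight network with respect to $\mathcal L$ if each $L\in\mathcal L$ (induced metric) is $(\tau,\eta)$-quasi-convex, $X=\bigcup_{L\in\mathcal L}\mathcal N_\tau(L)$, and for any $L,L'\in\mathcal L$ and any point $z$ such that $B(z,3\tau)$ meets both $L$ and $L'$, there is a sequence $L=L_1,\dots,L_k=L'$ in $\mathcal L$, $k\le\eta$, with each $\mathcal N_\tau(L_i)\cap\mathcal N_\tau(L_{i+1})$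 of infinite diameter, $\eta$-path connected and meeting $B(z,\eta)$. *)

(* Defs.v *)
From Stdlib Require Import Reals.
Open Scope R_scope.

Set Implicit Arguments.
Section Metric.
Variable T : Type.
Variable d : T -> T -> R.

Definition is_metric : Prop :=
  (forall x y, 0 <= d x y) /\ (forall x y, d x y = 0 <-> x = y) /\
  (forall x y, d x y = d y x) /\ (forall x y z, d x z <= d x y + d y z).

(* N_r(A) = { z | dist(z,A) < r }  (dist(z,A) < r iff some w in A has d z w < r) *)
Definition nbhd (r : R) (A : T -> Prop) : T -> Prop :=
  fun z => exists w, A w /\ d z w < r.

Definition ball (a : T) (r : R) : T -> Prop := fun z => d a z < r.

Definition geodesic_space : Prop :=
  forall x y, exists g : R -> T, g 0 = x /\ g (d x y) = y /\
    forall s t, 0 <= s <= d x y -> 0 <= t <= d x y -> d (g s) (g t) = Rabs (s - t).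

Definition quasi_geodesic (lam kap l : R) (q : R -> T) : Prop :=
  forall s t, 0 <= s <= l -> 0 <= t <= l ->
    / lam * Rabs (s - t) - kap <= d (q s) (q t) /\
    d (q s) (q t) <= lam * Rabs (s - t) + kap.

Definition quasi_convex (tau eta : R) (A : T -> Prop) : Prop :=
  forall x y, A x -> A y -> exists (l : R) (q : R -> T),
    0 <= l /\ q 0 = x /\ q l = y /\ quasi_geodesic eta eta l q /\
    forall s, 0 <= s <= l -> nbhd tau A (q s).

Definition cont_on01 (g : R -> T) : Prop :=
  forall s, 0 <= s <= 1 -> forall eps, 0 < eps -> exists del, 0 < del /\
    forall t, 0 <= t <= 1 -> Rabs (t - s) < del -> d (g s) (g t) < eps.

Definition path_connected_in (eta : R) (A : T -> Prop) : Prop :=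
  forall x y, A x -> A y -> exists g : R -> T,
    cont_on01 g /\ g 0 = x /\ g 1 = y /\
    forall s, 0 <= s <= 1 -> nbhd eta A (g s).

Definition infinite_diam (A : T -> Prop) : Prop :=
  forall r : R, exists x y, A x /\ A y /\ r < d x y.

Definition inter (A B : T -> Prop) : T -> Prop := fun z => A z /\ B z.

Definition tight_network (tau eta : R) (coll : (T -> Prop) -> Prop) : Prop :=
  (forall L, coll L -> quasi_convex tau eta L) /\
  (forall z, exists L, coll L /\ nbhd tau L z) /\
  (forall L L' z, coll L -> coll L' ->
     (exists w, L w /\ d z w < 3 * tau) -> (exists w, L' w /\ d z w < 3 * tau) ->
     exists (k : nat) (f : nat -> T -> Prop),
       (1 <= k)%nat /\ INR k <= eta /\ f 1%nat = L /\ f k = L' /\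
       (forall i, (1 <= i <= k)%nat -> coll (f i)) /\
       (forall i, (1 <= i < k)%nat ->
          let I := inter (nbhd tau (f i)) (nbhd tau (f (S i))) in
          infinite_diam I /\ path_connected_in eta I /\
          exists w, I w /\ d z w < eta)).

End Metric.

(* Main.v *)
Require Import Defs.
From Stdlib Require Import Reals Lra Lia Psatz.
Open Scope R_scope.
Set Implicit Arguments.

Definition good (T : Type) (d : T -> T -> R) tau eta (a : T) r (A B : T -> Prop) : Prop :=
  let I := inter (nbhd d tau A) (nbhd d tau B) in
  infinite_diam d I /\ path_connected_in d eta I /\ exists w, I w /\ ball d a r w.

Definition chain (T : Type) (d : T -> T -> R) tau eta (coll : (T -> Prop) -> Prop)
  (a : T) r (n : nat) (A B : T -> Prop) : Prop :=
  exists f : nat -> T -> Prop, (1 <= n)%nat /\ f 1%nat = A /\ f n = B /\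
   (forall i, (1 <= i <= n)%nat -> coll (f i)) /\
   (forall i, (1 <= i < n)%nat -> good d tau eta a r (f i) (f (S i))).

Lemma chain_refl (T : Type) (d : T -> T -> R) tau eta coll a r (A : T -> Prop) :
  coll A -> chain d tau eta coll a r 1 A A.
Proof.
  intros HA. exists (fun _ => A). split; [lia|split;[reflexivity|split;[reflexivity|split]]].
  - intros; exact HA.
  - intros; lia.
Qed.

Lemma chain_cat (T : Type) (d : T -> T -> R) tau eta coll a r n1 n2 (A B C : T -> Prop) :
  chain d tau eta coll a r n1 A B -> chain d tau eta coll a r n2 B C ->
  chain d tau eta coll a r (n1 + n2 - 1) A C.
Proof.
  intros [f1 [h1 [a1 [b1 [c1 e1]]]]] [f2 [h2 [a2 [b2 [c2 e2]]]]].
  exists (fun i => if Nat.leb i n1 then f1 i else f2 (i + 1 - n1)%nat).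
  split; [lia|split;[|split;[|split]]].
  - cbv beta. destruct (Nat.leb_spec 1 n1); [exact a1 | lia].
  - cbv beta. destruct (Nat.leb_spec (n1+n2-1) n1).
    + assert (n2 = 1%nat) by lia. subst n2.
      replace (n1+1-1)%nat with n1 by lia. rewrite b1, <- a2. exact b2.
    + replace (n1+n2-1+1-n1)%nat with n2 by lia. exact b2.
  - intros i Hi. cbv beta. destruct (Nat.leb_spec i n1).
    + apply c1; lia.
    + apply c2; lia.
  - intros i Hi. cbv beta. destruct (Nat.leb_spec i n1); destruct (Nat.leb_spec (S i) n1).
    + apply e1; lia.
    + assert (i = n1) by lia. subst i.
      replace (S n1 + 1 - n1)%nat with 2%nat by lia. rewrite b1, <- a2. apply e2; lia.
    + lia.
    + replace (S i + 1 - n1)%nat with (S (i+1-n1)) by lia. apply e2; lia.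
Qed.

Lemma step_chain (T : Type) (d : T -> T -> R) tau eta coll a r (S S' : T -> Prop) z w w' :
  is_metric d -> tight_network d tau eta coll -> coll S -> coll S' ->
  S w -> d z w < 3*tau -> S' w' -> d z w' < 3*tau -> d a z + eta <= r ->
  exists k, INR k <= eta /\ chain d tau eta coll a r k S S'.
Proof.
  intros [dpos [deq [dsym dtri]]] [_ [_ H3]] HS HS' Sw dw S'w dw' Hr.
  destruct (H3 S S' z HS HS' (ex_intro _ w (conj Sw dw)) (ex_intro _ w' (conj S'w dw')))
    as [k [f [hk [hke [f1 [fk [hc he]]]]]]].
  exists k. split; [exact hke|].
  exists f. split;[exact hk|split;[exact f1|split;[exact fk|split;[exact hc|]]]].
  intros i Hi. specialize (he i Hi). cbv zeta in he.
  destruct he as [A [B [w0 [Iw dw0]]]].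
  unfold good. cbv zeta. split;[exact A|split;[exact B|]].
  exists w0. split; [exact Iw|]. unfold ball.
  specialize (dtri a z w0). lra.
Qed.

Theorem corollary4p7 (T : Type) (d : T -> T -> R) (tau eta : R)
  (coll : (T -> Prop) -> Prop) :
  is_metric d -> geodesic_space d -> tight_network d tau eta coll ->
  forall M : R, 0 <= M -> exists Rb : R,
    forall L L', coll L -> coll L' ->
      (exists z, inter (nbhd d M L) (nbhd d M L') z) ->
      forall a, inter (nbhd d M L) (nbhd d M L') a ->
      exists (n : nat) (f : nat -> T -> Prop),
        (1 <= n)%nat /\ INR n <= Rb /\ f 1%nat = L /\ f n = L' /\
        (forall i, (1 <= i <= n)%nat -> coll (f i)) /\
        (forall i, (1 <= i < n)%nat ->
           let I := inter (nbhd d tau (f i)) (nbhd d tau (f (S i))) in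
           infinite_diam d I /\ path_connected_in d eta I /\
           exists w, I w /\ ball d a Rb w).
Proof.
  intros Hm Hg Ht M HM.
  pose proof Hm as Hm'. destruct Hm' as [dpos [deq [dsym dtri]]].
  destruct (Rlt_dec 0 tau) as [Htau|Htau].
  2: { exists 0. intros L L' _ _ _ a _. exfalso. destruct Ht as [_ [Hcov _]].
       destruct (Hcov a) as [L0 [_ [w [_ Hw]]]]. specialize (dpos a w). lra. }
  assert (exists N:nat, (1 <= N)%nat /\ 2*M < INR N * tau) as [N [HN1 HNt]].
  { destruct (archimed_cor1 (tau/(2*M+1))) as [N [H1 H2]].
    { apply Rdiv_lt_0_compat; lra. }
    exists N. split; [lia|].
    assert (HN0 : 0 < INR N) by (apply lt_0_INR; lia).
    assert (Hx: / INR N * INR N = 1) by (field; lra).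
    assert (Hy: / (2*M+1) * (2*M+1) = 1) by (field; lra).
    unfold Rdiv in H1. set (u := / INR N) in *. set (v := / (2*M+1)) in *.
    assert (E1 : u * INR N < tau * v * INR N) by (apply Rmult_lt_compat_r; lra).
    assert (E2 : u * INR N * (2*M+1) < tau * v * INR N * (2*M+1))
      by (apply Rmult_lt_compat_r; lra).
    assert (E: tau*v*INR N*(2*M+1) = tau*INR N)
      by (replace (tau*v*INR N*(2*M+1)) with (tau*INR N*(v*(2*M+1))) by ring;
          rewrite Hy; ring).
    rewrite Hx, E in E2. lra. }
  set (Rb := 3*M + Rabs eta + 1 + (INR N + 1) * Rabs eta).
  assert (HRb1 : 3*M + eta <= Rb).
  { unfold Rb. pose proof (Rle_abs eta). pose proof (Rabs_pos eta). pose proof (pos_INR N).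
    assert (0 <= (INR N + 1) * Rabs eta) by (apply Rmult_le_pos; lra). lra. }
  assert (HRb2 : 1 + (INR N + 1) * eta <= Rb).
  { unfold Rb. pose proof (Rle_abs eta). pose proof (Rabs_pos eta). pose proof (pos_INR N).
    assert ((INR N + 1) * eta <= (INR N + 1) * Rabs eta) by (apply Rmult_le_compat_l; lra). lra. }
  exists Rb.
  intros L L' HL HL' _ a [[x [Lx dax]] [x' [Lx' dax']]].
  set (D := d x x').
  assert (HD : D < 2*M).
  { unfold D. specialize (dtri x a x'). rewrite (dsym x a) in dtri. lra. }
  assert (HD0 : 0 <= D) by apply dpos.
  destruct (Hg x x') as [g [g0 [gD gd]]].
  fold D in gD, gd.
  assert (HNpos: 0 < INR N) by (apply lt_0_INR; lia).
  set (p := fun j => g (INR j * D / INR N)).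
  assert (Hdt : D / INR N < tau).
  { assert (D / INR N * INR N = D) by (field; lra). set (q := D / INR N) in *. nra. }
  assert (Hrng : forall j, (j <= N)%nat -> 0 <= INR j * D / INR N <= D).
  { intros j Hj. apply le_INR in Hj. assert (0 <= INR j) by apply pos_INR.
    assert (INR j * D / INR N * INR N = INR j * D) by (field; lra).
    set (q := INR j * D / INR N) in *. split; nra. }
  assert (Hpa : forall j, (j <= N)%nat -> d a (p j) + eta <= Rb).
  { intros j Hj. unfold p. specialize (dtri a x (g (INR j * D / INR N))).
    rewrite <- g0 in dtri at 2. rewrite gd in dtri by (try apply Hrng; auto; lra).
    destruct (Hrng j Hj).
    rewrite Rminus_0_l, Rabs_Ropp, Rabs_right in dtri by lra. lra. }
  assert (Hstep : forall j, (j < N)%nat -> d (p j) (p (S j)) < tau).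
  { intros j Hj. unfold p. rewrite gd by (apply Hrng; lia). rewrite S_INR.
    replace (INR j * D / INR N - (INR j + 1) * D / INR N) with (-(D/INR N)) by (field; lra).
    rewrite Rabs_Ropp, Rabs_right. exact Hdt.
    apply Rle_ge. unfold Rdiv. apply Rmult_le_pos; [lra| left; apply Rinv_0_lt_compat; lra]. }
  assert (Hind : forall j, (j <= N)%nat -> exists S0 n w, coll S0 /\ S0 w /\ d (p j) w < tau /\
             INR n <= 1 + INR j * eta /\ chain d tau eta coll a Rb n L S0).
  { induction j as [|j IH]; intros Hj.
    - exists L, 1%nat, x. split; [auto|split;[auto|split;[|split]]].
      + unfold p. simpl INR. replace (0 * D / INR N) with 0 by (field; lra). rewrite g0.
        rewrite (proj2 (deq x x) eq_refl); lra.
      + simpl; lra.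
      + apply chain_refl; auto.
    - destruct (IH ltac:(lia)) as [S0 [n [w [HS [Sw [dw [Hn Hc]]]]]]].
      destruct (proj1 (proj2 Ht) (p (S j))) as [S' [HS' [w' [S'w' dw']]]].
      assert (E1 := Hstep j ltac:(lia)).
      assert (E2 := dtri (p j) (p (S j)) w').
      destruct (@step_chain T d tau eta coll a Rb S0 S' (p j) w w' Hm Ht HS HS' Sw
                  ltac:(lra) S'w' ltac:(lra) (Hpa j ltac:(lia))) as [k [Hk Hck]].
      assert (1 <= n)%nat by (destruct Hc as [f [h _]]; exact h).
      assert (1 <= k)%nat by (destruct Hck as [f [h _]]; exact h).
      exists S', (n+k-1)%nat, w'. split;[|split;[|split;[|split]]]; auto.
      + rewrite minus_INR by lia. rewrite plus_INR. simpl (INR 1). rewrite S_INR. nra.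
      + eapply chain_cat; eauto. }
  destruct (Hind N (le_n N)) as [S0 [n [w [HS [Sw [dw [Hn Hc]]]]]]].
  unfold p in dw. replace (INR N * D / INR N) with D in dw by (field; lra). rewrite gD in dw.
  assert (Ex := proj2 (deq x' x') eq_refl).
  destruct (@step_chain T d tau eta coll a Rb S0 L' x' w x' Hm Ht HS HL' Sw
              ltac:(lra) Lx' ltac:(lra) ltac:(lra)) as [k [Hk Hck]].
  destruct (chain_cat Hc Hck) as [f [h1 [f1 [fn [hc he]]]]].
  assert (1 <= n)%nat by (destruct Hc as [f' [h _]]; exact h).
  assert (1 <= k)%nat by (destruct Hck as [f' [h _]]; exact h).
  exists (n+k-1)%nat, f. split;[exact h1|split;[|split;[exact f1|split;[exact fn|split;[exact hc|]]]]].
  - rewrite minus_INR by lia. rewrite plus_INR. simpl (INR 1). nra.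
  - intros i Hi. exact (he i Hi).
Qed.
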